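(* Let $\xi_0,\dots,\xi_{m-1}\in\mathbb{Q}_p$. If $\sum_{j=0}^{m-1}\chi(\xi_j)=0$, then $p$ divides $m$ and $\sum_{j=0}^{m-1}\chi(x\xi_j)=0$ for every $x\in\mathbb{Z}_p^\times$.
   Context: $p\ge2$ is a prime and $\mathbb{Z}_p^\times=\{x\in\mathbb{Q}_p:|x|_p=1\}$ is the group of units of $\mathbb{Z}_p$. Characters: $\chi(x)=e^{2\pi i\{x\}}$, where $\{x\}=\sum_{n=v_p(x)}^{-1}a_np^n$ is the fractional part of $x=\sum_{n\ge v_p(x)}a_np^n$ with digits $a_n\in\{0,\dots,p-1\}$. *)

(* Defs.v *)
From Stdlib Require Import Reals Lia Arith ZArith Znumtheory.
Open Scope R_scope.

(* Z_p as the inverse limit of Z/p^n Z: a compatible family of residues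
   s n in [0, p^n) with s (n+1) = s n (mod p^n). *)
Record Zp (p : nat) := mkZp {
  zp_seq : nat -> nat;
  zp_lt : forall n, (zp_seq n < p ^ n)%nat;
  zp_compat : forall n, Nat.modulo (zp_seq (S n)) (p ^ n) = zp_seq n
}.
Arguments zp_seq {p} _ _.

Lemma zp_pow_nz p (x : Zp p) n : (p ^ n <> 0)%nat.
Proof. pose proof (zp_lt p x n); lia. Qed.

Lemma zp_mul_lt p (x y : Zp p) n :
  (Nat.modulo (zp_seq x n * zp_seq y n) (p ^ n) < p ^ n)%nat.
Proof. apply Nat.mod_upper_bound, (zp_pow_nz p x). Qed.

Lemma zp_mul_compat p (x y : Zp p) n :
  Nat.modulo (Nat.modulo (zp_seq x (S n) * zp_seq y (S n)) (p ^ S n)) (p ^ n)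
  = Nat.modulo (zp_seq x n * zp_seq y n) (p ^ n).
Proof.
  pose proof (zp_pow_nz p x n) as H0.
  replace (p ^ S n)%nat with (p ^ n * p)%nat by (simpl; lia).
  rewrite Nat.Div0.mod_mul_r.
  rewrite (Nat.mul_comm (p ^ n)%nat (_ mod p)%nat), Nat.Div0.mod_add, Nat.Div0.mod_mod.
  rewrite Nat.Div0.mul_mod, (zp_compat p x n), (zp_compat p y n).
  reflexivity.
Qed.

Definition Zp_mul {p} (x y : Zp p) : Zp p :=
  mkZp p (fun n => Nat.modulo (zp_seq x n * zp_seq y n) (p ^ n))
       (zp_mul_lt p x y) (zp_mul_compat p x y).

(* x is a unit of Z_p, i.e. |x|_p = 1, i.e. x is not divisible by p. *)
Definition Zp_unit {p} (x : Zp p) : Prop := zp_seq x 1 <> 0%nat.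

(* Q_p: every element is p^{-k} z with k : nat and z : Z_p;
   the pair (k, z) stands for p^{-k} z. *)
Definition Qp (p : nat) : Type := (nat * Zp p)%type.

Definition Qp_scale {p} (x : Zp p) (xi : Qp p) : Qp p :=
  (fst xi, Zp_mul x (snd xi)).

(* p-adic fractional part {xi}: for xi = p^{-k} z, {xi} = (z mod p^k)/p^k. *)
Definition frac_p {p} (xi : Qp p) : R :=
  INR (zp_seq (snd xi) (fst xi)) / INR (p ^ fst xi).

(* chi(xi) = e^{2 pi i {xi}}, given by its real and imaginary parts. *)
Definition chi_re {p} (xi : Qp p) : R := cos (2 * PI * frac_p xi).
Definition chi_im {p} (xi : Qp p) : R := sin (2 * PI * frac_p xi).

Fixpoint rsum (f : nat -> R) (m : nat) : R :=
  match m with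
  | O => 0
  | S m' => rsum f m' + f m'
  end.

(* Main.v *)
Require Import Defs.
From Stdlib Require Import Reals Lia Lra Arith ZArith Znumtheory.
From mathcomp Require Import all_boot all_order all_algebra all_field zify.
From mathcomp Require Import Rstruct complex.
Import GRing.Theory Num.Theory.
Set Implicit Arguments. Unset Strict Implicit. Unset Printing Implicit Defensive.

Lemma modE a b : Nat.modulo a b = a %% b.
Proof. case: b => [|b]; first by [].
symmetry; apply: (Nat.mod_unique _ _ (a %/ b.+1)).
  by apply/ltP; rewrite ltn_pmod.
rewrite {1}(divn_eq a b.+1). lia.
Qed.

Lemma powE a b : Nat.pow a b = expn a b.
Proof. elim: b => [|b IH] //=. by rewrite expnS IH multE. Qed.

Lemma prime_conv p : Znumtheory.prime (Z.of_nat p) -> prime p.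
Proof.
move=> hp; apply/primeP; split.
  have := prime_ge_2 _ hp; lia.
move=> d /dvdnP [k hk].
have : (Z.of_nat d | Z.of_nat p)%Z by exists (Z.of_nat k); rewrite hk; lia.
move/(prime_divisors _ hp) => h.
apply/orP; case: h => [|[|[|]]]; lia.
Qed.

Local Open Scope ring_scope.
Section Alg.
Variables (p K : nat).
Hypothesis hp : prime p.
Let M := (p ^ K)%N.
Lemma pe_gt0 e : (0 < p ^ e)%N.
Proof. by rewrite expn_gt0 prime_gt0. Qed.

Definition Phi (R : nzRingType) : {poly R} := \sum_(i < p) ('X^M) ^+ i.

Lemma Phi_map (R S : nzRingType) (f : {rmorphism R -> S}) :
  map_poly f (Phi R) = Phi S.
Proof. by rewrite /Phi rmorph_sum; apply: eq_bigr => i _; rewrite rmorphXn /= map_polyXn. Qed.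

Lemma Phi_mul (R : nzRingType) : ('X^M - 1) * Phi R = 'X^(p ^ K.+1) - 1.
Proof. by rewrite /Phi -subrX1 -exprM expnSr. Qed.

Lemma Phi_monic (R : nzRingType) : Phi R \is monic.
Proof.
have := monicXnsubC (R:=R) 1 (pe_gt0 K.+1); rewrite polyC1 -Phi_mul.
by rewrite monicMl // -polyC1 monicXnsubC // pe_gt0.
Qed.

Lemma Phi_size (R : nzRingType) : size (Phi R) = (totient (p ^ K.+1)).+1.
Proof.
have hM : (0 < M)%N by rewrite pe_gt0.
have e : size (('X^M - 1) * Phi R) = size ('X^(p ^ K.+1) - (1 : {poly R})) by rewrite Phi_mul.
move: e; rewrite -polyC1 size_XnsubC ?pe_gt0 //.
rewrite size_Mmonic ?Phi_monic //; last first.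
  by rewrite -size_poly_eq0 size_XnsubC.
rewrite size_XnsubC // totient_pfactor //= expnSr.
have hp1 := prime_gt1 hp.
rewrite -/M; case: (size (Phi R)) => [|s] /=; first by lia.
move=> e; congr S.
rewrite mulnC; have: (M * p = M + M * p.-1)%N by rewrite -{1}(prednK (prime_gt0 hp)) mulnS.
lia.
Qed.

Lemma Phi_horner (R : nzRingType) (x : R) : (Phi R).[x] = \sum_(i < p) (x ^+ M) ^+ i.
Proof.
rewrite /Phi horner_sum; apply: eq_bigr => i _.
by rewrite -exprM hornerXn -exprM.
Qed.

Lemma Phi_root (R : idomainType) (x : R) :
  x ^+ M != 1 -> x ^+ (p ^ K.+1) = 1 -> root (Phi R) x.
Proof.
move=> h1 h2; have := congr1 (fun P => P.[x]) (Phi_mul R).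
rewrite hornerM !hornerE h2 subrr => /eqP; rewrite mulf_eq0 subr_eq0 (negbTE h1) /=.
by [].
Qed.

Lemma key (F : numFieldType) (z : F) (q : {poly rat}) :
  root (Phi F) z -> root (map_poly ratr q) z -> Phi rat %| q.
Proof.
move=> hz hq.
set g := gcdp (Phi rat) q.
have gz : root (map_poly (ratr : rat -> F) g) z.
  by rewrite gcdp_map root_gcd Phi_map hz hq.
have Pnz : Phi rat != 0 by apply: monic_neq0; apply: Phi_monic.
have gnz : g != 0 by rewrite gcdp_eq0 negb_and Pnz.
have gs : (1 < size g)%N.
  rewrite -(size_map_poly (ratr : {rmorphism rat -> F})).
  apply: root_size_gt1 gz; by rewrite map_poly_eq0.
have [w hw] : exists w : algC, root (map_poly ratr g) w.
  apply/closed_rootP; rewrite size_map_poly; by rewrite neq_ltn gs orbT.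
have hPw : root (Phi algC) w.
  rewrite -(Phi_map ratr); apply: root_dvdp hw; rewrite dvdp_map; exact: dvdp_gcdl.
have hpw : (w ^+ (p ^ K.+1) = 1).
  have := congr1 (fun P => P.[w]) (Phi_mul algC).
  by rewrite hornerM (rootP hPw) mulr0 !hornerE => /esym/eqP; rewrite subr_eq0 => /eqP.
have hM1 : w ^+ M != 1.
  apply/negP => /eqP e; move: hPw; rewrite /root Phi_horner e.
  rewrite (eq_bigr (fun _ => 1)); last by move=> i _; rewrite expr1n.
  by rewrite sumr_const card_ord pnatr_eq0; case: (p) hp.
have [d hd dd] := prim_order_exists (pe_gt0 K.+1) hpw.
have hd' : d = (p ^ K.+1)%N.
  case/(dvdn_pfactor _ _ hp): dd => e he de.
  move: he; rewrite leq_eqVlt => /orP [/eqP he'|]; first by rewrite de he'.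
  rewrite ltnS => heK.
  exfalso; move/negP: hM1; apply; apply/eqP.
  rewrite /M -(subnKC heK) expnD exprM -de (prim_expr_order hd) expr1n //.
rewrite hd' in hd.
have [pw [eqm monpw] rootp] := minCpolyP w.
have e1 : size pw = size (Phi rat).
  rewrite Phi_size -(size_map_poly (ratr : {rmorphism rat -> algC})) -eqm.
  by rewrite (minCpoly_cyclotomic hd) size_cyclotomic.
have d1 : pw %| g by rewrite -rootp.
have d2 : pw %| Phi rat by apply: dvdp_trans d1 (dvdp_gcdl _ _).
have : pw %= Phi rat by rewrite -dvdp_size_eqp // e1.
move/eqp_dvdl => <-; apply: dvdp_trans d1 (dvdp_gcdr _ _).
Qed.

End Alg.

Local Open Scope R_scope.
Definition zeta (t : R) : R[i] := Complex (cos t) (sin t).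

Lemma zeta_pow t a : (zeta t ^+ a)%R = Complex (cos (INR a * t)) (sin (INR a * t)).
Proof.
elim: a => [|a IH].
  by rewrite expr0 /= Rmult_0_l cos_0 sin_0.
rewrite exprS IH S_INR Rmult_plus_distr_r Rmult_1_l.
rewrite (Rplus_comm _ t) cos_plus sin_plus.
rewrite /zeta /GRing.mul /=.
congr Complex; apply: Rplus_comm.
Qed.

Lemma sum_complex (f g : nat -> R) m :
  (\sum_(j < m) Complex (f j) (g j))%R = Complex (rsum f m) (rsum g m).
Proof.
elim: m => [|m IH]; first by rewrite big_ord0.
by rewrite big_ord_recr /= IH.
Qed.

Lemma cos_lt1 x : 0 < x < 2 * PI -> cos x < 1.
Proof.
move=> [h1 h2].
have e : x = 2 * (x / 2) by field.
rewrite e cos_2a_sin.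
have : 0 < sin (x / 2) by apply: sin_gt_0; lra.
nra.
Qed.

Section Zeta.
Variable n : nat.
Hypothesis hn : (0 < n)%N.
Definition th := 2 * PI / INR n.
Definition z := zeta th.

Lemma z_n : (z ^+ n)%R = 1%R.
Proof.
rewrite /z zeta_pow /th.
have -> : INR n * (2 * PI / INR n) = 2 * PI.
  field; apply: not_0_INR; lia.
by rewrite cos_2PI sin_2PI.
Qed.

Lemma z_k k : (0 < k < n)%N -> (z ^+ k)%R != 1%R.
Proof.
move=> /andP [h1 h2]; rewrite /z zeta_pow; apply/eqP => [[e _]].
have : cos (INR k * th) < 1.
  apply: cos_lt1; rewrite /th.
  have hk : 0 < INR k by apply: lt_0_INR; lia.
  have hkn : INR k < INR n by apply: lt_INR; lia.
  have hn0 : 0 < INR n by apply: lt_0_INR; lia.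
  have hPI := PI_RGT_0; split.
    apply: Rmult_lt_0_compat => //; apply: Rdiv_lt_0_compat => //; lra.
  have -> : INR k * (2 * PI / INR n) = 2 * PI * (INR k / INR n) by field; lra.
  have : INR k / INR n < 1.
    apply: (Rmult_lt_reg_r (INR n)) => //; rewrite /Rdiv Rmult_assoc Rinv_l; lra.
  move=> hr; rewrite -{2}(Rmult_1_r (2 * PI)); apply: Rmult_lt_compat_l => //; lra.
rewrite e => h; change (1 < 1) in h; lra.
Qed.

Lemma z_prim : (n.-primitive_root z)%R.
Proof.
have [d hd dd] := prim_order_exists hn z_n.
have d0 := prim_order_gt0 hd.
have dn := dvdn_leq hn dd.
have [dl|dg|de] := ltngtP d n.
- by have := @z_k d; rewrite d0 dl (prim_expr_order hd) eqxx => /(_ isT).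
- by move: dn; rewrite leqNgt dg.
- by rewrite -de.
Qed.
End Zeta.

Local Open Scope ring_scope.
Section Core.
Variables (p K : nat).
Hypothesis hp : prime p.
Let n := (p ^ K.+1)%N.
Let M := (p ^ K)%N.
Lemma n_gt0 : (0 < n)%N. Proof. by rewrite expn_gt0 prime_gt0. Qed.

Lemma zu_root u : ~~ (p %| u)%N -> root (Phi p K R[i]) ((z n) ^+ u).
Proof.
move=> hu; apply: Phi_root.
  rewrite -exprM; have := eq_prim_root_expr (z_prim n_gt0) (u * M) 0.
  rewrite expr0 => ->; apply/negP => h.
  have : (n %| u * M)%N by rewrite /dvdn; move: h; rewrite mod0n.
  rewrite /n /M expnS. by rewrite dvdn_pmul2r ?expn_gt0 ?prime_gt0 // (negbTE hu).
by rewrite -exprM mulnC exprM z_n ?n_gt0 // expr1n.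
Qed.

Variables (a : nat -> nat) (m : nat).
Definition Qpol (R : nzRingType) : {poly R} := \sum_(j < m) 'X^(a j).
Lemma Qpol_map (R S : nzRingType) (f : {rmorphism R -> S}) :
  map_poly f (Qpol R) = Qpol S.
Proof. by rewrite /Qpol rmorph_sum; apply: eq_bigr => i _; rewrite rmorphXn /= map_polyX. Qed.
Lemma Qpol_horner (R : nzRingType) (x : R) : (Qpol R).[x] = \sum_(j < m) x ^+ a j.
Proof. by rewrite /Qpol horner_sum; apply: eq_bigr => i _; rewrite hornerXn. Qed.

Lemma core : \sum_(j < m) (z n) ^+ a j = 0 ->
  (p %| m)%N /\ forall u, ~~ (p %| u)%N -> \sum_(j < m) ((z n) ^+ u) ^+ a j = 0.
Proof.
move=> H.
have hroot : root (map_poly ratr (Qpol rat)) (z n : R[i]).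
  by rewrite Qpol_map /root Qpol_horner H.
have hz1 : root (Phi p K R[i]) (z n) by rewrite -(expr1 (z n)) zu_root // dvdn1; apply/eqP => e1; move: (hp); rewrite e1.
have hd := key hp hz1 hroot.
split; last first.
  move=> u hu; have [h e] := dvdpP _ _ hd.
  rewrite -Qpol_horner -(Qpol_map ratr) e rmorphM /= hornerM Phi_map.
  by rewrite (rootP (zu_root hu)) mulr0.
have mon := @Phi_monic p K hp int.
have e := Pdiv.RingMonic.rdivp_eq mon (Qpol int).
set h := Pdiv.CommonRing.rdivp _ _ in e; set r := Pdiv.CommonRing.rmodp _ _ in e.
have hr : (size r < size (Phi p K int))%N by rewrite Pdiv.Ring.ltn_rmodp monic_neq0.
have e' := congr1 (map_poly (intr : int -> rat)) e.
rewrite rmorphD rmorphM /= !Qpol_map Phi_map in e'.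
rewrite e' (dvdp_addr _ (dvdp_mull _ (dvdpp _))) in hd.
have sr : size (map_poly (intr : int -> rat) r) = size r.
  by apply: size_map_inj_poly; [apply: intr_inj | rewrite mulr0z].
have r0 : r = 0.
  apply/eqP; rewrite -size_poly_eq0 -sr size_poly_eq0; apply/negP => /negP nz.
  have := dvdp_leq nz hd; rewrite sr leqNgt; move: hr; rewrite !Phi_size // => -> //.
rewrite r0 addr0 in e.
have := congr1 (fun P => P.[1]) e; rewrite /= hornerM Qpol_horner Phi_horner.
rewrite (eq_bigr (fun _ => 1)); last by move=> i _; rewrite expr1n.
rewrite [X in _ = _ * X](eq_bigr (fun _ => 1)); last by move=> i _; rewrite !expr1n.
rewrite !sumr_const !card_ord => e1.
have := congr1 absz e1; rewrite abszM !natz /= => ->.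
by rewrite dvdn_mull.
Qed.
End Core.

Local Open Scope R_scope.

Lemma rsum_ext (f g : nat -> R) m :
  (forall j, (j < m)%N -> f j = g j) -> rsum f m = rsum g m.
Proof.
elim: m => [|m IH] h //=.
by rewrite IH ?h // => j hj; apply: h; apply: ltnW.
Qed.

Lemma compatE p (x : Defs.Zp p) k : (zp_seq x k.+1 %% p ^ k)%N = zp_seq x k.
Proof. by rewrite -powE -modE zp_compat. Qed.

Lemma ltE p (x : Defs.Zp p) k : (zp_seq x k < p ^ k)%N.
Proof. rewrite -powE; apply/ltP; apply: zp_lt. Qed.

Lemma chain p (x : Defs.Zp p) k d : (zp_seq x (k + d) %% p ^ k)%N = zp_seq x k.
Proof.
elim: d => [|d IH]; first by rewrite addn0 modn_small // ltE.
rewrite addnS -IH -(compatE x (k + d)).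
by rewrite modn_dvdm // dvdn_exp2l // leq_addr.
Qed.

Lemma frac_gen p (c k N : nat) : (0 < p)%N -> (k <= N)%N ->
  2 * PI * (INR c / INR (Nat.pow p k)) =
  INR (c * p ^ (N - k)) * (2 * PI / INR (p ^ N)).
Proof.
move=> hp hk.
have e : (p ^ N = p ^ k * p ^ (N - k))%N by rewrite -expnD subnKC.
rewrite e !mult_INR powE.
have h1 : INR (p ^ k) <> 0 by apply: not_0_INR; apply/eqP; rewrite -lt0n expn_gt0 hp.
have h2 : INR (p ^ (N - k)) <> 0 by apply: not_0_INR; apply/eqP; rewrite -lt0n expn_gt0 hp.
field; split => //.
Qed.

Lemma congr_mod p (u zk k N : nat) : (k <= N)%N ->
  ((u * (zk * p ^ (N - k))) %% p ^ N = ((u %% p ^ k) * zk %% p ^ k) * p ^ (N - k))%N.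
Proof.
move=> hk.
have e : (p ^ N = p ^ k * p ^ (N - k))%N by rewrite -expnD subnKC.
by rewrite e mulnA -muln_modl modnMml.
Qed.

Import Defs.
Import Znumtheory.
Open Scope R_scope.

Theorem lemma2p6 (p : nat) (Hp : prime (Z.of_nat p)) (m : nat)
  (xi : nat -> Qp p) :
  rsum (fun j => chi_re (xi j)) m = 0 /\ rsum (fun j => chi_im (xi j)) m = 0 ->
  Nat.divide p m /\
  (forall x : Zp p, Zp_unit x ->
     rsum (fun j => chi_re (Qp_scale x (xi j))) m = 0 /\
     rsum (fun j => chi_im (Qp_scale x (xi j))) m = 0).
Proof.
move=> [Hre Him].
have hp := prime_conv Hp.
have hp0 := prime_gt0 hp.
pose K0 := (\max_(j < m) (xi j).1)%N.
pose K := K0.+1. pose N := K.+1. pose n := (p ^ N)%N.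
have hk : forall j, (j < m)%N -> ((xi j).1 <= N)%N.
  move=> j hj; have := @leq_bigmax 'I_m (fun j : 'I_m => (xi j).1) (Ordinal hj).
  rewrite -/K0 /= => h; rewrite /N /K; lia.
pose a j := (zp_seq (xi j).2 (xi j).1 * p ^ (N - (xi j).1))%N.
have Hfrac : forall j, (j < m)%N -> 2 * PI * frac_p (xi j) = INR (a j) * th n.
  by move=> j hj; rewrite /frac_p /th /a /n (@frac_gen p _ _ N) // hk.
have Hsum : (\sum_(j < m) (z n) ^+ a j)%R = 0%R.
  rewrite (eq_bigr (fun j : 'I_m => Complex (chi_re (xi j)) (chi_im (xi j)))).
    by rewrite (sum_complex (fun j => chi_re (xi j)) (fun j => chi_im (xi j))) Hre Him.
  by move=> j _; rewrite /z zeta_pow /chi_re /chi_im Hfrac.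
have [hdv hgal] := core (K:=K) hp Hsum.
split.
  by case/dvdnP: hdv => k ->; exists k; rewrite multE.
move=> x hx.
pose u := zp_seq x N.
have hu : ~~ (p %| u)%N.
  rewrite /dvdn; have := chain x 1 K; rewrite add1n expn1 => ->.
  by apply/eqP.
have := hgal u hu.
rewrite (eq_bigr (fun j : 'I_m => Complex (chi_re (Qp_scale x (xi j))) (chi_im (Qp_scale x (xi j))))).
  rewrite (sum_complex (fun j => chi_re (Qp_scale x (xi j))) (fun j => chi_im (Qp_scale x (xi j)))).
  by case.
move=> j _.
have hj := hk j (ltn_ord j).
rewrite -exprM -(expr_mod _ (z_n (n:=n) _)); last by rewrite expn_gt0 hp0.
rewrite congr_mod //.
have -> : (u %% p ^ (xi j).1 = zp_seq x (xi j).1)%N by rewrite /u -{1}(subnKC hj) chain.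
rewrite /z zeta_pow /chi_re /chi_im /frac_p /Qp_scale /= /th.
rewrite /n (@frac_gen p _ _ N) //.
by rewrite modE multE powE.
Qed.
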